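(* Let $R$ be a discrete valuation ring of characteristic $p>0$ with field of fractions $K$. Let $H$ be a primitively generated $K$-Hopf algebra of rank $p^n$, let $t_1,\dots,t_n$ be a $K$-basis of $\mathrm{Prim}(H)$ with associated matrix $B\in M_n(R)$ (so $t_i^p=\sum_j b_{j,i}t_j$). For $\Theta=(\theta_{j,i})\in\mathrm{GL}_n(K)$ with $A=\Theta^{-1}B\Theta^{(p)}\in M_n(R)$, let $H_\Theta=R[\{\sum_j\theta_{j,i}t_j:1\le i\le n\}]\subseteq H$ be the corresponding $R$-Hopf order (the image of the $R$-Hopf algebra with associated matrix $A$ under $u_i\mapsto\sum_j\theta_{j,i}t_j$). Let $\Theta$ be such a matrix and let $\Theta'\in \mathrm{GL}_n(K)$. Then the following are equivalent: (a) $A'=\Theta'^{-1}B\Theta'^{(p)}\in M_n(R)$ and $H_{\Theta'}=H_\Theta$ (i.e. $A$ and $A'$ are associated to the same Hopf order); (b) $\Theta'=\Theta U$ for some $U\in\mathrm{GL}_n(R)$.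
   Context: $\Theta^{(p)}$ denotes the matrix obtained from $\Theta$ by raising each entry to the $p$-th power. All Hopf algebras are commutative, cocommutative, finitely generated projective, of $p$-power rank. $t$ is primitive if $\Delta(t)=t\otimes1+1\otimes t$; $\mathrm{Prim}(H)$ is the module of primitives; $H$ is primitively generated if generated as an algebra by its primitives. An $R$-Hopf order in a $K$-Hopf algebra $H$ is a finitely generated projective $R$-submodule which is an $R$-Hopf algebra under the inherited operations and spans $H$ over $K$. *)

(* Defs.v *)
From HB Require Import structures.
From mathcomp Require Import all_boot all_order all_algebra all_field.
Set Implicit Arguments. Unset Strict Implicit. Unset Printing Implicit Defensive.
Import Order.TTheory GRing.Theory Num.Theory.
Local Open Scope ring_scope.

(* Discrete valuation rings, realised (as usual) inside their fraction field. *)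
Definition discrete_valuation (K : fieldType) (v : K -> int) : Prop :=
  [/\ forall x y : K, x != 0 -> y != 0 -> v (x * y) = v x + v y,
      forall x y : K, x != 0 -> y != 0 -> x + y != 0 ->
        Num.min (v x) (v y) <= v (x + y)
    & forall k : int, exists x : K, x != 0 /\ v x = k].

Definition is_dvr_in (K : fieldType) (R : {pred K}) : Prop :=
  exists v : K -> int, discrete_valuation v /\
    forall x : K, (x \in R) = (x == 0) || (0 <= v x).

(* Tensor products H (x) H and H (x) H (x) H of a finite-dimensional K-space  *)
(* in coordinates w.r.t. the canonical basis e = vbasis {:H}.                 *)
Section Hopf.
Variables (K : fieldType) (H : falgType K).

Definition hdim := \dim {:H}.
Definition hb (i : 'I_hdim) : H := tnth (vbasis {:H}) i.
Definition hc (i : 'I_hdim) (x : H) : K := coord (vbasis {:H}) i x.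

Definition tens2 := 'M[K]_hdim.
Definition tens (u v : H) : tens2 := \matrix_(i, j) (hc i u * hc j v).

(* multiplication on H (x) H: (a (x) b)(c (x) d) = ac (x) bd, bilinearly *)
Definition tmul (X Y : tens2) : tens2 :=
  \sum_(i < hdim) \sum_(j < hdim) \sum_(k < hdim) \sum_(l < hdim)
     (X i j * Y k l) *: tens (hb i * hb k) (hb j * hb l).

Definition is_cc_hopf (D : H -> tens2) (eps : H -> K) (S : H -> H) : Prop :=
  ( forall x y : H, x * y = y * x) /\
      (forall (a : K) (x y : H), D (a *: x + y) = a *: D x + D y)
        /\ D 1 = tens 1 1 /\ (forall x y, D (x * y) = tmul (D x) (D y)) /\
      (forall (a : K) (x y : H), eps (a *: x + y) = a * eps x + eps y)
        /\ eps 1 = 1 /\ (forall x y, eps (x * y) = eps x * eps y) /\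
      (* coassociativity: (D (x) id) D = (id (x) D) D *)
      (forall (x : H) (a b c : 'I_hdim),
         \sum_(i < hdim) D x i c * D (hb i) a b
         = \sum_(j < hdim) D x a j * D (hb j) b c) /\
      (forall x : H,
         \sum_(i < hdim) \sum_(j < hdim) (D x i j * eps (hb i)) *: hb j = x
         /\ \sum_(i < hdim) \sum_(j < hdim) (D x i j * eps (hb j)) *: hb i = x) /\
      (* antipode: linear, and m (S (x) id) D = m (id (x) S) D = eta eps *)
      (forall (a : K) (x y : H), S (a *: x + y) = a *: S x + S y)
        /\ (forall x : H,
         \sum_(i < hdim) \sum_(j < hdim) D x i j *: (S (hb i) * hb j) = eps x *: 1
         /\ \sum_(i < hdim) \sum_(j < hdim) D x i j *: (hb i * S (hb j)) = eps x *: 1) /\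
  ( forall x : H, (D x)^T = D x).

Definition primitive (D : H -> tens2) (x : H) : Prop := D x = tens x 1 + tens 1 x.

Definition primv (D : H -> tens2) : {vspace H} :=
  lker (linfun (fun x : H => D x - tens x 1 - tens 1 x)).

Definition prim_generated (D : H -> tens2) : Prop :=
  agenv (primv D) = fullv.

(* the R-subalgebra R[s_1,...,s_n] of H generated by the s_i *)
Definition Rgen (R : {pred K}) (n : nat) (s : 'I_n -> H) (x : H) : Prop :=
  forall P : H -> Prop,
    (forall i, P (s i)) -> (forall r, r \in R -> P (r%:A)) ->
    (forall u v, P u -> P v -> P (u + v)) ->
    (forall u v, P u -> P v -> P (u * v)) -> P x.

Definition mxcomb (n : nat) (Th : 'M[K]_n) (t : 'I_n -> H) (i : 'I_n) : H :=
  \sum_(j < n) Th j i *: t j.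

End Hopf.

Definition frobmx (K : fieldType) (p n : nat) (M : 'M[K]_n) : 'M[K]_n :=
  map_mx (fun x => x ^+ p) M.

(* Main.v *)
Require Import Defs.
From HB Require Import structures.
From mathcomp Require Import all_boot all_order all_algebra all_field.
Set Implicit Arguments. Unset Strict Implicit. Unset Printing Implicit Defensive.
Import Order.TTheory GRing.Theory Num.Theory.
Local Open Scope ring_scope.

Section Core.
Variables (K : fieldType) (R : {pred K}).
Hypotheses (R0 : 0 \in R) (R1 : 1 \in R)
  (RD : forall x y, x \in R -> y \in R -> x + y \in R)
  (RM : forall x y, x \in R -> y \in R -> x * y \in R).
Variables (H : falgType K) (p n : nat) (s : 'I_n -> H) (A : 'M[K]_n).
Hypotheses (Hcomm : forall x y : H, x * y = y * x) (p_gt1 : (1 < p)%N)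
  (AR : forall i j, A i j \in R)
  (sp : forall i, s i ^+ p = \sum_l A l i *: s l).

Definition hmul (x y : H) := x * y.
Lemma hmulA : associative hmul. Proof. exact: mulrA. Qed.
Lemma hmulC : commutative hmul. Proof. exact: Hcomm. Qed.
Lemma hmul1 : left_id 1 hmul. Proof. exact: mul1r. Qed.
HB.instance Definition _ := Monoid.isComLaw.Build H 1 hmul hmulA hmulC hmul1.

Definition gmono (f : 'I_n -> nat) : H := \big[hmul/1]_i s i ^+ f i.
Definition deg (f : 'I_n -> nat) : nat := (\sum_i f i)%N.
Local Notation E := {ffun 'I_n -> 'I_p}.
Definition inM (x : H) := exists c : E -> K,
  (forall e, c e \in R) /\ x = \sum_(e : E) c e *: gmono (fun i => e i).

Lemma gmono_ext f g : f =1 g -> gmono f = gmono g.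
Proof. by move=> fg; apply: eq_bigr => i _; rewrite fg. Qed.

Lemma gmonoD f g : gmono (fun i => f i + g i)%N = gmono f * gmono g.
Proof.
rewrite /gmono -[_ * _]/(hmul _ _) -big_split /=; apply: eq_bigr => i _; exact: exprD.
Qed.

Lemma gmono_delta l m : gmono (fun i => (i == l) * m)%N = s l ^+ m.
Proof.
rewrite /gmono (bigD1 l) //= eqxx mul1n big1 ?[hmul _ 1]mulr1 // => i /negbTE ->.
by rewrite mul0n expr0.
Qed.

Lemma gmono0 : gmono (fun _ => 0%N) = 1.
Proof. by rewrite /gmono big1 // => i _; rewrite expr0. Qed.

Lemma inM0 : inM 0.
Proof. by exists (fun _ => 0); split=> // ; rewrite big1 // => e _; rewrite scale0r. Qed.

Lemma inMD x y : inM x -> inM y -> inM (x + y).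
Proof.
move=> [c [cR ->]] [d [dR ->]]; exists (fun e => c e + d e); split=> [e|].
  exact: RD.
by rewrite -big_split; apply: eq_bigr => e _; rewrite scalerDl.
Qed.

Lemma inMZ r x : r \in R -> inM x -> inM (r *: x).
Proof.
move=> rR [c [cR ->]]; exists (fun e => r * c e); split=> [e|]; first exact: RM.
by rewrite scaler_sumr; apply: eq_bigr => e _; rewrite scalerA.
Qed.

Lemma inM_sum (I : finType) (F : I -> H) : (forall i, inM (F i)) -> inM (\sum_i F i).
Proof.
by move=> FM; apply: (big_ind inM) => //; [exact: inM0 | exact: inMD].
Qed.

Lemma inM_red (e : E) : inM (gmono (fun i => e i)).
Proof.
exists (fun e' => (e' == e)%:R); split=> [e'|].
  by case: (e' == e).
rewrite (bigD1 e) //= eqxx scale1r big1 ?addr0 // => e' /negbTE ->.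
by rewrite scale0r.
Qed.

Lemma inM_step f : (forall g, deg g < deg f -> inM (gmono g))%N -> inM (gmono f).
Proof.
move=> IH.
case: (boolP [forall i, f i < p]%N) => [/forallP flt | /forallPn [j]].
  have := inM_red [ffun i => Ordinal (flt i)].
  by rewrite (@gmono_ext (fun i => [ffun i => Ordinal (flt i)] i) f) // => i; rewrite ffunE.
rewrite -leqNgt => pfj.
pose f' i := if i == j then (f i - p)%N else f i.
have -> : gmono f = s j ^+ p * gmono f'.
  rewrite -gmono_delta -gmonoD; apply: gmono_ext => i; rewrite /f'.
  by case: eqP => [-> | _]; rewrite ?mul1n ?mul0n ?add0n // subnKC.
rewrite sp mulr_suml; apply: inM_sum => l; rewrite -scalerAl; apply: inMZ => //.
rewrite -[s l]expr1 -gmono_delta -gmonoD; apply: IH.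
have dfe : deg f = (deg f' + p)%N.
  rewrite /deg (bigD1 j) //= [in RHS](bigD1 j) //= /f' eqxx.
  have -> : (\sum_(i < n | i != j) (if i == j then f i - p else f i) = \sum_(i < n | i != j) f i)%N.
    by apply: eq_bigr => i /negbTE ->.
  by rewrite addnAC subnK.
have h1 : (\sum_(i < n) (i == l) * 1 = 1)%N.
  rewrite (bigD1 l) //= big1 => [|i /negbTE -> //]; by rewrite eqxx.
have -> : deg (fun i => (i == l) * 1 + f' i)%N = (deg f' + 1)%N.
  by rewrite /deg big_split /= h1 addnC.
by rewrite dfe ltn_add2l.
Qed.

Lemma inM_gmono f : inM (gmono f).
Proof.
move: {2}(deg f) (leqnn (deg f)) => d; elim: d f => [|d IH] f fd.
  by apply: inM_step => g; rewrite ltnNge (leq_trans fd).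
apply: inM_step => g gf; apply: IH; rewrite -ltnS; exact: leq_trans gf fd.
Qed.

Lemma inMM x y : inM x -> inM y -> inM (x * y).
Proof.
move=> [c [cR ->]] [d [dR ->]]; rewrite mulr_suml; apply: inM_sum => e.
rewrite mulr_sumr; apply: inM_sum => e'.
rewrite -scalerAl -scalerAr scalerA; apply: inMZ; first exact: RM.
rewrite -gmonoD; exact: inM_gmono.
Qed.

Lemma inM_s i : inM (s i).
Proof. by rewrite -[s i]expr1 -gmono_delta; exact: inM_gmono. Qed.

Lemma inM_alg r : r \in R -> inM (r%:A).
Proof. by move=> rR; rewrite -gmono0; apply: inMZ => //; exact: inM_gmono. Qed.

Lemma Rgen_inM x : Rgen R s x -> inM x.
Proof. by move=> /(_ inM); apply; [exact: inM_s | exact: inM_alg | exact: inMD | exact: inMM]. Qed.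

Definition X : #|E|.-tuple H := [tuple gmono (fun i => enum_val j i) | j < #|E|].

Lemma X_nth (j : 'I_#|E|) : X`_j = gmono (fun i => enum_val j i).
Proof. by rewrite nth_mktuple. Qed.

Lemma inM_span x : inM x -> x \in <<X>>%VS.
Proof.
move=> [c [_ ->]]; apply: memv_suml => e _; apply: memvZ.
rewrite -(enum_rankK e) -X_nth; apply: memv_span; apply: mem_nth.
by rewrite size_tuple.
Qed.

Lemma spanX_mul u v : u \in <<X>>%VS -> v \in <<X>>%VS -> u * v \in <<X>>%VS.
Proof.
move=> /coord_span -> /coord_span ->; rewrite mulr_suml; apply: memv_suml => i _.
rewrite mulr_sumr; apply: memv_suml => j _; rewrite -scalerAl -scalerAr.
do 2 apply: memvZ; apply: inM_span; apply: inMM; rewrite X_nth; exact: inM_gmono.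
Qed.

Lemma X_basis (T : seq H) : agenv <<T>>%VS = fullv -> {subset T <= <<X>>%VS} ->
  \dim {:H} = (p ^ n)%N -> basis_of fullv X.
Proof.
move=> Hfull TX Hdim; have hs : size X = (p ^ n)%N by rewrite size_tuple card_ffun !card_ord.
rewrite basisEdim hs Hdim leqnn andbT.
rewrite -Hfull; apply: agenv_sub_modl.
  rewrite -memvE; apply: inM_span; rewrite -[1]scale1r; exact: inM_alg.
apply/prodvP => u v uT vX; apply: spanX_mul => //.
by move/span_subvP: TX => /subvP; apply.
Qed.

Lemma coord_gm (e : E) j : free X -> coord X j (gmono (fun i => e i)) = (enum_rank e == j)%:R.
Proof. by move=> fX; rewrite -{1}(enum_rankK e) -X_nth coord_free. Qed.

Lemma coord_inM (c : E -> K) e0 : free X ->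
  coord X (enum_rank e0) (\sum_e c e *: gmono (fun i => e i)) = c e0.
Proof.
move=> fX; rewrite linear_sum (bigD1 e0) //= linearZ /= coord_gm // eqxx mulr1.
rewrite big1 ?addr0 // => e ne; rewrite linearZ /= coord_gm //.
by rewrite (inj_eq enum_rank_inj) (negbTE ne) mulr0.
Qed.

Lemma coeffs_in_R x (u : 'I_n -> K) : free X -> inM x ->
  x = \sum_k u k *: s k -> forall k, u k \in R.
Proof.
move=> fX [c [cR xc]] xu k0.
pose ek (k : 'I_n) : E := [ffun i => if i == k then Ordinal p_gt1 else Ordinal (ltnW p_gt1)].
have sek k : s k = gmono (fun i => ek k i).
  rewrite -[s k]expr1 -gmono_delta; apply: gmono_ext => i; rewrite ffunE.
  by case: (i == k).
have ekI : injective ek.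
  move=> k k' /ffunP /(_ k); rewrite !ffunE eqxx; case: eqP => // _ /(congr1 val) //.
have := coord_inM c (ek k0) fX; rewrite -xc xu linear_sum.
rewrite (bigD1 k0) //= linearZ /= sek coord_gm // eqxx mulr1 big1 ?addr0.
  by move=> ->.
move=> k nk; rewrite linearZ /= sek coord_gm //.
by rewrite (inj_eq enum_rank_inj) (inj_eq ekI) (negbTE nk) mulr0.
Qed.

End Core.

Lemma dvr_closed (K : fieldType) (R : {pred K}) : is_dvr_in R ->
  [/\ 0 \in R, 1 \in R, forall x y, x \in R -> y \in R -> x + y \in R
    & forall x y, x \in R -> y \in R -> x * y \in R].
Proof.
case=> v [[vM vD _] Rv]; split.
- by rewrite Rv eqxx.
- rewrite Rv; have h := vM 1 1 (oner_neq0 K) (oner_neq0 K); rewrite mulr1 in h.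
  have -> : v 1 = 0 by apply: (addrI (v 1)); rewrite addr0; exact: esym h.
  by rewrite lexx orbT.
- move=> x y; rewrite !Rv.
  case: (eqVneq x 0) => [-> _|x0]; first by rewrite add0r.
  case: (eqVneq y 0) => [-> hx _|y0]; first by rewrite addr0 (negbTE x0).
  case: (eqVneq (x + y) 0) => [-> //|xy0] /= hx hy.
  apply: le_trans (vD x y x0 y0 xy0); by rewrite le_min hx hy.
- move=> x y; rewrite !Rv.
  case: (eqVneq x 0) => [-> _|x0]; first by rewrite mul0r eqxx.
  case: (eqVneq y 0) => [-> _|y0]; first by rewrite mulr0 eqxx.
  by rewrite /= vM // => hx hy; rewrite addr_ge0 ?orbT.
Qed.

Lemma mxcomb_mul (K : fieldType) (H : falgType K) n (N M : 'M[K]_n) (t : 'I_n -> H) i :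
  \sum_k M k i *: mxcomb N t k = mxcomb (N *m M) t i.
Proof.
rewrite /mxcomb; under eq_bigr do rewrite scaler_sumr.
rewrite exchange_big; apply: eq_bigr => j _; rewrite mxE scaler_suml.
by apply: eq_bigr => k _; rewrite scalerA mulrC.
Qed.

Lemma mxcomb1 (K : fieldType) (H : falgType K) n (t : 'I_n -> H) i :
  mxcomb 1%:M t i = t i.
Proof.
rewrite /mxcomb (bigD1 i) //= mxE eqxx mulr1n scale1r big1 ?addr0 // => j ne.
by rewrite mxE (negbTE ne) mulr0n scale0r.
Qed.

Lemma frob_sum (K : fieldType) (H : falgType K) p n (a : 'I_n -> K) (t : 'I_n -> H) :
  (forall x y : H, x * y = y * x) -> p \in [pchar K] ->
  (\sum_j a j *: t j) ^+ p = \sum_j a j ^+ p *: t j ^+ p.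
Proof.
move=> Hcomm pK; have pH : p \in [pchar H] by rewrite pchar_lalg.
apply: (big_rec2 (fun x y => x ^+ p = y)).
  by rewrite expr0n gtn_eqF // prime_gt0 // (pcharf_prime pK).
move=> j y1 y2 _ <-; rewrite -!(pFrobenius_autE pH) pFrobenius_autD_comm //.
  by rewrite !pFrobenius_autE exprZn.
Qed.

Lemma sp_Th (K : fieldType) (H : falgType K) p n (t : 'I_n -> H) (B Th : 'M[K]_n) :
  (forall x y : H, x * y = y * x) -> p \in [pchar K] -> Th \in unitmx ->
  (forall i, t i ^+ p = \sum_j B j i *: t j) -> forall i,
  mxcomb Th t i ^+ p = \sum_l (invmx Th *m B *m frobmx p Th) l i *: mxcomb Th t l.
Proof.
move=> Hcomm pK ThU tp i.
rewrite mxcomb_mul !mulmxA mulmxV // mul1mx.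
rewrite {1}/mxcomb frob_sum //; rewrite -mxcomb_mul.
by apply: eq_bigr => j _; rewrite tp mxE.
Qed.

Lemma invmx_mul (K : fieldType) n (M N : 'M[K]_n) : M \in unitmx -> N \in unitmx ->
  invmx (M *m N) = invmx N *m invmx M.
Proof.
move=> MU NU; have MN : M *m N \in unitmx by rewrite unitmx_mul MU NU.
have h : (M *m N) *m (invmx N *m invmx M) = 1%:M.
  by rewrite mulmxA -(mulmxA M) mulmxV // mulmx1 mulmxV.
by rewrite -[LHS]mulmx1 -h mulmxA mulVmx // mul1mx.
Qed.

Lemma mxOver_mul (K : fieldType) (R : {pred K}) n (M N : 'M[K]_n) :
  0 \in R -> (forall x y, x \in R -> y \in R -> x + y \in R) ->
  (forall x y, x \in R -> y \in R -> x * y \in R) ->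
  M \is a mxOver R -> N \is a mxOver R -> M *m N \is a mxOver R.
Proof.
move=> R0 RD RM /mxOverP MR /mxOverP NR; apply/mxOverP => i j; rewrite mxE.
by apply: (big_ind (fun x => x \in R)) => // k _; apply: RM.
Qed.

Lemma mxOver_frob (K : fieldType) (R : {pred K}) p n (M : 'M[K]_n) :
  1 \in R -> (forall x y, x \in R -> y \in R -> x * y \in R) ->
  M \is a mxOver R -> frobmx p M \is a mxOver R.
Proof.
move=> R1 RM /mxOverP MR; apply/mxOverP => i j; rewrite mxE.
by elim: p => [|q IH]; rewrite ?expr0 // exprS RM.
Qed.

Lemma frobmxM (K : fieldType) p n (M N : 'M[K]_n) : p \in [pchar K] ->
  frobmx p (M *m N) = frobmx p M *m frobmx p N.
Proof.
move=> pK; have e : forall P : 'M[K]_n, frobmx p P = map_mx (pFrobenius_aut pK) P by [].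
by rewrite !e map_mxM.
Qed.

Lemma Rgen_trans (K : fieldType) (R : {pred K}) (H : falgType K) n (s s' : 'I_n -> H) :
  (forall i, Rgen R s (s' i)) -> forall x, Rgen R s' x -> Rgen R s x.
Proof. by move=> hs x hx P Ps PR PD PM; apply: hx => // i; exact: hs. Qed.

Lemma Rgen_comb (K : fieldType) (R : {pred K}) (H : falgType K) n (t : 'I_n -> H)
  (N M : 'M[K]_n) : 0 \in R -> M \is a mxOver R ->
  forall i, Rgen R (mxcomb N t) (mxcomb (N *m M) t i).
Proof.
move=> R0 /mxOverP MR i; rewrite -mxcomb_mul => P Ps PR PD PM.
apply: (big_ind P) => [|x y|k _]; last 1 first.
- by rewrite -mulr_algl; apply: PM; [exact: PR | exact: Ps].
- by have := PR 0 R0; rewrite scale0r.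
- exact: PD.
Qed.

Lemma key (p : nat) (K : fieldType) (R : {pred K}) (H : falgType K) n
  (t : 'I_n -> H) (B Th Th' : 'M[K]_n) :
  0 \in R -> 1 \in R -> (forall x y, x \in R -> y \in R -> x + y \in R) ->
  (forall x y, x \in R -> y \in R -> x * y \in R) ->
  (forall x y : H, x * y = y * x) -> prime p -> p \in [pchar K] ->
  agenv <<[seq t i | i <- enum 'I_n]>>%VS = fullv -> \dim {:H} = (p ^ n)%N ->
  (forall i, t i ^+ p = \sum_j B j i *: t j) ->
  Th \in unitmx -> invmx Th *m B *m frobmx p Th \is a mxOver R ->
  (forall i, Rgen R (mxcomb Th t) (mxcomb Th' t i)) ->
  invmx Th *m Th' \is a mxOver R.
Proof.
move=> R0 R1 RD RM Hcomm pp pK Hfull Hdim tp ThU /mxOverP AR hR.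
have sp := sp_Th Hcomm pK ThU tp.
have p_gt1 := prime_gt1 pp.
have TX : {subset [seq t i | i <- enum 'I_n] <= <<X p (mxcomb Th t)>>%VS}.
  move=> v /mapP [i _ ->]; rewrite -(mxcomb1 t i) -(mulmxV ThU) -mxcomb_mul.
  apply: memv_suml => l _; apply: memvZ; apply: inM_span.
  exact: (inM_s R0 R1 RD RM Hcomm p_gt1 AR sp).
have fX := basis_free (X_basis R0 R1 RD RM Hcomm p_gt1 AR sp Hfull TX Hdim).
apply/mxOverP => k i.
apply: (@coeffs_in_R K R H p n (mxcomb Th t) Hcomm p_gt1 _ (fun k => (invmx Th *m Th') k i) fX (Rgen_inM R0 R1 RD RM Hcomm p_gt1 AR sp (hR i))).
by rewrite mxcomb_mul mulmxA mulmxV // mul1mx.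
Qed.

Theorem corollary4p3 (p : nat) (K : fieldType) (R : {pred K})
  (H : falgType K) (D : H -> tens2 H) (eps : H -> K) (S : H -> H)
  (n : nat) (t : 'I_n -> H) (B Th Th' : 'M[K]_n) :
  prime p -> p \in [pchar K] -> is_dvr_in R ->
  is_cc_hopf D eps S -> prim_generated D -> \dim {:H} = (p ^ n)%N ->
  basis_of (primv D) [seq t i | i <- enum 'I_n] ->
  (forall i : 'I_n, t i ^+ p = \sum_(j < n) B j i *: t j) ->
  B \is a mxOver R ->
  Th \in unitmx -> invmx Th *m B *m frobmx p Th \is a mxOver R ->
  Th' \in unitmx ->
  ((invmx Th' *m B *m frobmx p Th' \is a mxOver R /\
    (forall x : H, Rgen R (mxcomb Th' t) x <-> Rgen R (mxcomb Th t) x))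
   <->
   (exists U : 'M[K]_n, [/\ U \is a mxOver R, U \in unitmx,
                           invmx U \is a mxOver R & Th' = Th *m U])).
Proof.
move=> pp pK dvr hopf pgen Hdim tbasis tp BR ThU AR Th'U.
have [R0 R1 RD RM] := dvr_closed dvr.
have Hcomm : forall x y : H, x * y = y * x by case: hopf.
have Hfull : agenv <<[seq t i | i <- enum 'I_n]>>%VS = fullv.
  by rewrite (span_basis tbasis).
split.
- move=> [A'R hiff].
  have U1 := key R0 R1 RD RM Hcomm pp pK Hfull Hdim tp ThU AR
    (fun i => (hiff _).1 (fun P Ps _ _ _ => Ps i)).
  have U2 := key R0 R1 RD RM Hcomm pp pK Hfull Hdim tp Th'U A'R
    (fun i => (hiff _).2 (fun P Ps _ _ _ => Ps i)).
  exists (invmx Th *m Th'); split => //.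
  + by rewrite unitmx_mul unitmx_inv ThU Th'U.
  + by rewrite invmx_mul ?unitmx_inv // invmxK.
  + by rewrite mulmxA mulmxV // mul1mx.
- move=> [U [UR UU UiR ->]]; split.
  + rewrite invmx_mul // frobmxM //.
    have -> : invmx U *m invmx Th *m B *m (frobmx p Th *m frobmx p U) =
      invmx U *m (invmx Th *m B *m frobmx p Th) *m frobmx p U by rewrite !mulmxA.
    apply: mxOver_mul => //; first exact: mxOver_mul.
    exact: mxOver_frob.
  + move=> x; split; apply: Rgen_trans => i.
    * exact: Rgen_comb.
    * have -> : mxcomb Th t i = mxcomb (Th *m U *m invmx U) t i.
        by rewrite -mulmxA mulmxV // mulmx1.
      exact: Rgen_comb.
Qed.
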